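(* Let $\tau$ be a veering triangulation of $M$ with $AB$-cycles $c_1,\dots,c_n$ of lengths $k_1,\dots,k_n$ and classes $g_i=[c_i]\in G$. Then $$\mathcal{AB}(\tilde\tau)\cong\bigoplus_{i=1}^n\frac{\mathbb{Z}[G]}{\left(1+(-1)^{k_i+1}g_i\right)},$$ where the $i$th summand's generator maps to a fixed (lifted) face of $c_i$, and consequently, up to a unit of $\mathbb{Z}[G]$, $$V^{\mathcal{AB}}_\tau=\prod_{i=1}^n\left(1+(-1)^{k_i+1}g_i\right).$$
   Context: $\tau$ is a veering triangulation of $M$ (taut ideal triangulation with cooriented faces, each tetrahedron having two bottom and two top faces, a bottom edge, a top edge and four side edges, angle sum $2\pi$ around edges, with a consistent right/left veer on edges modelled on a thickened rhombus whose side edges of positive slope are right-veering and of negative slope left-veering); $F$ its set of faces. $G=H_1(M;\mathbb{Z})/\mathrm{torsion}$ (multiplicative), $\hat M$ the cover with deck group $G$, $\tilde\tau$ the lift. For a face $f$, let $t$ be the tetrahedron having $f$ as a bottom face; $A(f)$ is the top face of $t$ meeting $f$ along the edge of $t$ having the same veer as the top edge of $t$. $A:F\to F$ is a permutation; its cycles are the $AB$-cycles; the length of a cycle is the number of faces in it; each $AB$-cycle determines a directed closed curve in $M$ (crossing its faces in order through the corresponding tetrahedra) and hence a class $[c]\in G$. Lifting to $\hat M$ and choosing lifts of faces, $A$ induces a $\mathbb{Z}[G]$-linear map $A:\mathbb{Z}[G]^F\to\mathbb{Z}[G]^F$ (a lifted face maps to the corresponding top face of the lifted tetrahedron above it). $L^{\mathcal{AB}}=I+A$,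 $\mathcal{AB}(\tilde\tau)=\mathrm{coker}(L^{\mathcal{AB}})$, and $V^{\mathcal{AB}}_\tau=\det L^{\mathcal{AB}}$. *)

(* Defs.v *)
From HB Require Import structures.
From mathcomp Require Import all_boot all_order all_algebra.
From mathcomp Require Import fingroup perm.
Set Implicit Arguments. Unset Strict Implicit. Unset Printing Implicit Defensive.
Import Order.TTheory GRing.Theory Num.Theory.
Local Open Scope ring_scope.

(* Faces are indexed by 'I_m.  The permutation [s] is A : F -> F, and
   [h f] is the (unit) coefficient such that the lifted face f~ is sent by A
   to h f * (chosen lift of A f), i.e. A(e_f) = h f * e_(s f) in R^F.       *)

Definition AB_A (R : comNzRingType) (m : nat) (s : {perm 'I_m}) (h : 'I_m -> R)
  : 'M[R]_m := \matrix_(i, j) (if i == s j then h j else 0).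

Definition AB_L (R : comNzRingType) (m : nat) (s : {perm 'I_m}) (h : 'I_m -> R)
  : 'M[R]_m := 1%:M + AB_A s h.

Definition cycle_class (R : comNzRingType) (m : nat) (s : {perm 'I_m})
  (h : 'I_m -> R) (f : 'I_m) : R := \prod_(x <- orbit s f) h x.

(* Congruence modulo the image of M : R^p -> R^q, i.e. equality in coker M. *)
Definition cong_mod (R : comNzRingType) (q p : nat) (M : 'M[R]_(q, p))
  (v w : 'cV[R]_q) : Prop := exists u : 'cV[R]_p, v - w = M *m u.

(* An R-module isomorphism  coker M1 -> coker M2, given by a set map
   Phi : R^q1 -> R^q2 which is well defined, R-linear, injective and
   surjective on the quotients. *)
Definition coker_iso (R : comNzRingType) (q1 p1 q2 p2 : nat)
  (M1 : 'M[R]_(q1, p1)) (M2 : 'M[R]_(q2, p2)) (Phi : 'cV[R]_q1 -> 'cV[R]_q2)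
  : Prop :=
  [/\ (forall v w, cong_mod M1 v w -> cong_mod M2 (Phi v) (Phi w)),
      (forall (a : R) v w, cong_mod M2 (Phi (a *: v + w)) (a *: Phi v + Phi w)),
      (forall v w, cong_mod M2 (Phi v) (Phi w) -> cong_mod M1 v w)
    & (forall u, exists v, cong_mod M2 (Phi v) u)].

Definition ecol (R : comNzRingType) (q : nat) (i : 'I_q) : 'cV[R]_q :=
  \col_j (if j == i then 1 else 0).

(* Main.v *)
Require Import Defs.
From HB Require Import structures.
From mathcomp Require Import all_boot all_order all_algebra.
From mathcomp Require Import fingroup perm.
From mathcomp Require Import ring.
Import Order.TTheory GRing.Theory Num.Theory.
Local Open Scope ring_scope.

Lemma det_tri (R : comNzRingType) (m : nat) (M : 'M[R]_m) (p : 'I_m -> nat) :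
  (forall i j, i != j -> M i j != 0 -> (p j < p i)%N) -> \det M = \prod_i M i i.
Proof.
move=> Hp; rewrite /determinant (bigD1 1%g) //= [X in _ + X]big1 ?addr0.
  by rewrite odd_perm1 expr0 mul1r; apply: eq_bigr => i _; rewrite perm1.
move=> sg nsg.
case: (pickP (fun i => M i (sg i) == 0)) => [i /eqP Mi0|H].
  by rewrite (bigD1 i) //= Mi0 mul0r mulr0.
exfalso.
have le i : (p (sg i) <= p i)%N.
  case: (eqVneq i (sg i)) => [<-|ne]; first exact: leqnn.
  by apply: ltnW; apply: Hp => //; have := H i; rewrite /= => ->.
have [j nj] : exists j, sg j != j.
  apply/existsP; apply: contraR nsg; rewrite negb_exists => /forallP Hs.
  by apply/eqP/permP => x; rewrite perm1; apply/eqP; have := Hs x; rewrite negbK.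
have Hlt : (\sum_i p (sg i) < \sum_i p i)%N.
  rewrite (bigD1 j) //= [X in (_ < X)%N](bigD1 j) //=.
  rewrite -addSn leq_add //; last by apply: leq_sum => i _; apply: le.
  by apply: Hp; [rewrite eq_sym|have := H j; rewrite /= => ->].
by move: Hlt; rewrite [X in (_ < X)%N](reindex_inj (@perm_inj _ sg)) ltnn.
Qed.

Lemma prod_traject (R : comNzRingType) (T : finType) (s : T -> T) (h : T -> R) y n :
  \prod_(x <- traject s y n) h x = \prod_(w < n) h (iter w s y).
Proof.
elim: n => [|n IH]; first by rewrite big_nil big_ord0.
by rewrite trajectSr big_rcons IH big_ord_recr.
Qed.

Theorem mainTheorem15 (R : comUnitRingType) (m : nat) (s : {perm 'I_m})
    (h : 'I_m -> R) (hunit : forall f, h f \is a GRing.unit)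
    (n : nat) (r : 'I_n -> 'I_m)
    (hr : forall f : 'I_m, exists! i : 'I_n, fconnect s (r i) f) :
  let d := fun i : 'I_n =>
    1 + (-1) ^+ (fingraph.order s (r i)).+1 * cycle_class s h (r i) in
  let D : 'M[R]_n := diag_mx (\row_i d i) in
  (exists Phi : 'cV[R]_m -> 'cV[R]_n,
      coker_iso (AB_L s h) D Phi /\
      forall i : 'I_n, cong_mod D (Phi (ecol R (r i))) (ecol R i))
  /\ (exists u : R, u \is a GRing.unit /\ \det (AB_L s h) = u * \prod_i d i).
Proof.
move=> d D.
have exi : forall f, exists i, fconnect s (r i) f.
  by move=> f; case: (hr f) => i [Hi _]; exists i.
pose iota f := @xchoose _ (fun i => fconnect s (r i) f) (exi f).
have hiota f : fconnect s (r (iota f)) f := xchooseP (exi f).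
have huniq f i : fconnect s (r i) f -> i = iota f.
  move=> Hi; case: (hr f) => i0 [_ U].
  by rewrite -(U i Hi) -(U _ (hiota f)).
have iota_s f : iota (s f) = iota f.
  by symmetry; apply: huniq; apply: connect_trans (hiota f) (fconnect1 s f).
have iota_r i : iota (r i) = i by symmetry; apply: huniq; apply: connect0.
have r_inj : injective r by move=> i j E; rewrite -(iota_r i) E iota_r.
pose k i := fingraph.order s (r i).
pose t f := findex s (r (iota f)) f.
have t_lt f : (t f < k (iota f))%N := findex_max (hiota f).
have iter_t f : iter (t f) s (r (iota f)) = f := iter_findex (hiota f).
have t_r i : t (r i) = 0%N by rewrite /t iota_r findex0.
have eq_it f g : iota f = iota g -> t f = t g -> f = g.
  by move=> E1 E2; rewrite -(iter_t f) -(iter_t g) E1 E2.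
have t0 f : t f = 0%N -> f = r (iota f).
  by move=> E; apply: eq_it; rewrite ?iota_r ?t_r.
have sE f : s f = iter (t f).+1 s (r (iota f)) by rewrite iterS iter_t.
have t_s f : ((t f).+1 < k (iota f))%N -> t (s f) = (t f).+1.
  move=> lt; have -> : t (s f) = findex s (r (iota f)) (s f) by rewrite /t iota_s.
  by rewrite sE findex_iter.
have s_wrap f : (t f).+1 = k (iota f) -> s f = r (iota f).
  by move=> E; rewrite sE E iter_order //; apply: perm_inj.
pose c' f := (-1) ^+ t f * \prod_(w < t f) h (iter w s (r (iota f))).
have cu f : c' f \is a GRing.unit.
  by rewrite unitrM unitrX ?unitrN1 //; apply: unitr_prod => w _; apply: hunit.
pose c f := (c' f)^-1.
have cc f : c' f * c f = 1 by apply: mulrV.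
have c'_s f : ((t f).+1 < k (iota f))%N -> h f * c' f = - c' (s f).
  move=> lt; have -> : c' (s f) = (-1) ^+ (t f).+1 *
     \prod_(w < (t f).+1) h (iter w s (r (iota f))) by rewrite /c' t_s // iota_s.
  rewrite big_ord_recr /= iter_t /c' exprS; ring.
pose q i := (-1) ^+ (k i).+1 * cycle_class s h (r i).
have c'_wrap f : (t f).+1 = k (iota f) -> h f * c' f = q (iota f).
  move=> E; rewrite /q /cycle_class /orbit prod_traject -/(k _) -E.
  rewrite big_ord_recr /= iter_t /c' !exprS; ring.
have c'_r i : c' (r i) = 1 by rewrite /c' t_r expr0 big_ord0 mulr1.
have c_r i : c (r i) = 1 by rewrite /c c'_r invr1.
pose X : 'M[R]_(n, m) := \matrix_(i, f) (if iota f == i then c f else 0).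
pose Z : 'M[R]_(m, n) := \matrix_(f, i) (if f == r i then 1 else 0).
pose Dq : 'M[R]_n := diag_mx (\row_i q i).
pose V : 'M[R]_m := \matrix_(f, g)
   (if (iota f == iota g) && (t g <= t f)%N then c' f * c g else 0).
pose M := 1%:M + Z *m Dq *m X.
have XZ : X *m Z = 1%:M.
  apply/matrixP => i j; rewrite !mxE (bigD1 (r j)) //= big1 ?addr0.
    by rewrite !mxE eqxx mulr1 iota_r c_r eq_sym; case: (i == j).
  by move=> f /negPf nf; rewrite !mxE nf mulr0.
have DE : D = 1%:M + Dq.
  by apply/matrixP => i j; rewrite !mxE; case: (i == j); rewrite ?mulr1n ?mulr0n ?addr0.
have ZDX f g : (Z *m Dq *m X) f g = (if f == r (iota g) then q (iota g) * c g else 0).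
  rewrite mul_mx_diag !mxE (bigD1 (iota g)) //= big1 ?addr0.
    by rewrite !mxE eqxx; case: (f == r (iota g)); rewrite ?mul1r ?mul0r.
  by move=> i /negPf ni; rewrite !mxE (eq_sym (iota g)) ni mulr0.
have LV : AB_L s h *m V = M.
  apply/matrixP => f0 g.
  have [f ->] : exists f, f0 = s f by exists ((s^-1)%g f0); rewrite permKV.
  rewrite /M [in RHS]mxE ZDX [in RHS]mxE /AB_L mulmxDl mul1mx !mxE.
  rewrite (bigD1 f) //= big1 ?addr0; last first.
    by move=> j nj; rewrite !mxE (inj_eq perm_inj) eq_sym (negPf nj) mul0r.
  rewrite !mxE eqxx.
  have [lt|eqk] : ((t f).+1 < k (iota f))%N \/ (t f).+1 = k (iota f).
    by have := t_lt f; rewrite leq_eqVlt => /orP[/eqP->|->]; [right|left].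
  - have nr : (s f == r (iota g)) = false.
      apply/negP => /eqP E; have := t_s f lt; rewrite E t_r //.
    rewrite nr addr0 iota_s t_s //.
    case E: (iota f == iota g); rewrite /= ?mulr0 ?addr0; last first.
      case: eqP => // Eg; move: E; rewrite -Eg iota_s eqxx //.
    case: (ltngtP (t g) (t f).+1) => Hlt.
    + have H1 : (t g <= t f)%N := Hlt; rewrite H1 ?(leq_trans H1 (leqnSn _)).
      have -> : (s f == g) = false.
        by apply/negP => /eqP Eg; move: Hlt; rewrite -Eg t_s // ltnn.
      by rewrite mulrA (c'_s f lt) mulNr addrN.
    + have -> : (t g <= t f)%N = false.
        by apply/negP => H; move: (leq_trans H (leqnSn _)); rewrite leqNgt Hlt.
      have -> : (s f == g) = false.
        by apply/negP => /eqP Eg; move: Hlt; rewrite -Eg t_s // ltnn.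
      by rewrite ?if_same ?mulr0 ?addr0.
    + have Eg : s f = g by apply: eq_it; rewrite ?iota_s ?(eqP E) // t_s.
      by rewrite Hlt ltnn mulr0 addr0 -Eg eqxx cc.
  - rewrite (s_wrap f eqk) iota_r t_r c'_r mul1r.
    case E: (iota f == iota g); rewrite /= ?mulr0 ?addr0; last first.
      have -> : (r (iota f) == g) = false.
        by apply/negP => /eqP Eg; move: E; rewrite -Eg iota_r eqxx; congruence.
      by rewrite (inj_eq r_inj) E addr0.
    rewrite -(eqP E) eqxx.
    have -> : (t g <= t f)%N by rewrite -ltnS eqk (eqP E); apply: t_lt.
    rewrite mulrA c'_wrap //.
    case Eg: (r (iota f) == g).
      by rewrite -(eqP Eg) t_r c_r.
    have -> : (t g <= 0)%N = false.
      apply/negP; rewrite leqn0 => /eqP H0; move: Eg; rewrite (t0 g H0) -(eqP E) eqxx //.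
    by rewrite add0r.
have detV : \det V = 1.
  have Ht : forall f g, f != g -> V f g != 0 -> (t g < t f)%N.
    move=> f g nfg; rewrite !mxE; case: ifP => [/andP[/eqP E Hle] _|_]; last first.
      by move=> /eqP/(_ erefl).
    rewrite ltn_neqAle Hle andbT; apply: contraNneq nfg => Et.
    by apply/eqP/eq_it.
  rewrite (@det_tri _ _ V t Ht).
  by rewrite big1 // => f _; rewrite !mxE eqxx leqnn cc.
have Ment f g : M f g = (f == g)%:R + (if f == r (iota g) then q (iota g) * c g else 0).
  by rewrite /M mxE ZDX mxE.
have detM : \det M = \prod_i d i.
  pose p f := nat_of_bool (f == r (iota f)).
  have Hp : forall f g, f != g -> M f g != 0 -> (p g < p f)%N.
    move=> f g nfg; rewrite Ment (negPf nfg) add0r.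
    case: ifP => [/eqP E _|_]; last by move=> /eqP/(_ erefl).
    rewrite /p E iota_r eqxx /=.
    case Eg: (g == r (iota g)) => //.
    by move: nfg; rewrite E -(eqP Eg) eqxx.
  rewrite (@det_tri _ _ M p Hp).
  rewrite (partition_big iota xpredT) //=; apply: eq_bigr => i _.
  rewrite (bigD1 (r i)) ?iota_r ?eqxx //= big1 ?mulr1.
    by rewrite Ment eqxx iota_r eqxx c_r mulr1.
  move=> f /andP[/eqP Ef nf]; rewrite Ment eqxx.
  by rewrite Ef (negPf nf) addr0.
have Vu : V \in unitmx by rewrite unitmxE detV unitr1.
have XM : X *m M = D *m X.
  by rewrite /M mulmxDr mulmx1 !mulmxA XZ mul1mx DE mulmxDl mul1mx.
have XL : X *m AB_L s h = D *m X *m invmx V.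
  by rewrite -[X *m AB_L s h]mulmx1 -(mulmxV Vu) !mulmxA -(mulmxA X) LV XM.
have MZ : M *m Z = Z *m D.
  by rewrite /M mulmxDl mul1mx -!mulmxA XZ mulmx1 DE mulmxDr mulmx1.
have MZX : M *m (Z *m X - 1%:M) = Z *m X - 1%:M.
  rewrite mulmxBr mulmx1 mulmxA MZ DE mulmxDr mulmx1 mulmxDl /M.
  by rewrite opprD addrACA subrr addr0.
split.
  exists (fun v => X *m v); split; last first.
    move=> i; exists 0; rewrite mulmx0; apply/eqP; rewrite subr_eq0; apply/eqP.
    apply/matrixP => j z; rewrite !mxE (bigD1 (r i)) //= big1 ?addr0.
      by rewrite !mxE eqxx mulr1 iota_r c_r eq_sym; case: (i == j).
    by move=> f /negPf nf; rewrite !mxE nf mulr0.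
  split.
  - move=> v w [u Hu]; exists (X *m invmx V *m u).
    by rewrite -mulmxBr Hu mulmxA XL !mulmxA.
  - by move=> a v w; exists 0; rewrite mulmx0 mulmxDr scalemxAr subrr.
  - move=> v w [u Hu]; exists (V *m Z *m u - V *m (Z *m X - 1%:M) *m (v - w)).
    rewrite mulmxBr !mulmxA LV MZ MZX -[Z *m D *m u]mulmxA -Hu.
    by rewrite -mulmxBr mulmxBl mul1mx mulmxA opprB [RHS]addrC subrK.
  - by move=> u; exists (Z *m u); exists 0; rewrite mulmxA XZ mul1mx subrr mulmx0.
exists 1; split; first exact: unitr1.
by rewrite mul1r -detM -LV det_mulmx detV mulr1.
Qed.
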